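(* Let $Y\subset B^+$ and $Z\subset A^+$ be finite composable sets with bijection $\beta:B\to Z$, and let $X=Y\circ_\beta Z$ be a trim decomposition. Let $\mathcal{B}=(Q,1,1)$ be the prefix automaton of $Y$ (over $B$), let $\mathcal{T}=(P,1,1)$ be the prefix transducer of $Z$ with respect to $\beta$, and let $\mathcal{A}=\mathcal{B}\circ\mathcal{T}$. Then: (a) $\mathcal{A}$ recognizes $X^*$ with multiplicities, i.e. for every $w\in A^*$ the number of paths from $(1,1)$ to $(1,1)$ in $\mathcal{A}$ labeled $w$ equals the number of factorizations of $w$ into words of $X$. (b) If $Y$ is complete, then the map $\rho:Q\times P\to P$, $\rho(q,p)=p$, is a reduction from $\mathcal{A}$ onto the prefix automaton of $Z$. (c) For $q,q'\in Q$ and $b\in B$, there is an edge $q\xrightarrow{b}q'$ in $\mathcal{B}$ if and only if there is a path in $\mathcal{A}$ from $(q,1)$ to $(q',1)$ labeled $\beta(b)$ all of whose intermediate states lie outside $\rho^{-1}(1)=Q\times\{1\}$.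
   Context: Two finite sets $Y\subset B^*$, $Z\subset A^*$ are composable if there is a bijection $\beta:B\to Z$ and every letter of $B$ occurs in some word of $Y$; extending $\beta$ to a morphism $B^*\to A^*$, $X=\beta(Y)$ is the composition $Y\circ_\beta Z$. The decomposition is trim if the restriction of $\beta$ to $Y$ is injective. A set $Y\subset B^*$ is complete if every word of $B^*$ is a factor of some word of $Y^*$. The prefix automaton of a finite set $X\subset A^+$ has as states the proper prefixes of words of $X$ (including the empty word $1$, which is initial and terminal), edges $p\xrightarrow{a}pa$ whenever $pa$ is a proper prefix of a word of $X$, and edges $p\xrightarrow{a}1$ whenever $pa\in X$. The prefix transducer of $Z$ (w.r.t. $\beta$) has the states $P$ of the prefix automaton of $Z$, edges $p\xrightarrow{a|1}pa$ when $pa\in P$, and edges $p\xrightarrow{a|b}1$ when $pa=\beta(b)\in Z$. The automaton $\mathcal{B}\circ\mathcal{T}$ (wreath product) has state set $Q\times P$, initial and terminal state $(1,1)$, and an edge $(q,p)\xrightarrow{a}(q',p')$ whenever $\mathcal{T}$ has an edge $p\xrightarrow{a|w}p'$ and either $w=1$ and $q'=q$, or $w=b\in B$ and $\mathcal{B}$ has an edge $q\xrightarrow{b}q'$. Recognition with multiplicities: the number of paths from initial to terminal state labeled $w$ equals the number of factorizations of $w$ into words of $X$. A reduction from $(P_1,i,t)$ onto $(Q_1,j,u)$ is a surjective map $\rho$ with $\rho(i)=j$, $\rho(t)=u$, such that for all states $q,q'$ and words $w$, there is a path $q\xrightarrow{w}q'$ in the target iff there is a path $p\xrightarrow{w}p'$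 in the source with $\rho(p)=q$, $\rho(p')=q'$. *)

(* Defs.v *)
(* Words over an alphabet T are [seq T]; the empty word is [::]. *)
From mathcomp Require Import all_boot.
Set Implicit Arguments. Unset Strict Implicit. Unset Printing Implicit Defensive.

Definition morph (B A : Type) (beta : B -> seq A) (u : seq B) : seq A :=
  flatten (map beta u).

Section Prefix.
Variable T : eqType.
Variable X : seq (seq T).

Definition pa_state (p : seq T) : bool :=
  has (fun x => prefix p x && (size p < size x)) X.

Definition pa_edge (p : seq T) (a : T) (p' : seq T) : bool :=
  pa_state p &&
  (((p' == rcons p a) && pa_state (rcons p a)) || ((p' == [::]) && (rcons p a \in X))).
End Prefix.

(* output None stands for the empty word 1, Some b for the letter b *)
Definition tr_edge (A : eqType) (B : Type) (Z : seq (seq A)) (beta : B -> seq A)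
    (p : seq A) (a : A) (o : option B) (p' : seq A) : bool :=
  pa_state Z p &&
  match o with
  | None => (p' == rcons p a) && pa_state Z (rcons p a)
  | Some b => (p' == [::]) && (rcons p a == beta b) && (beta b \in Z)
  end.

Definition wr_edge (A B : finType) (Y : seq (seq B)) (Z : seq (seq A))
    (beta : B -> seq A) (s : seq B * seq A) (a : A) (s' : seq B * seq A) : bool :=
  [&& pa_state Y s.1, pa_state Z s.2, pa_state Y s'.1, pa_state Z s'.2 &
  [exists o : option B,
     tr_edge Z beta s.2 a o s'.2 &&
     match o with
     | None => s'.1 == s.1
     | Some b => pa_edge Y s.1 b s'.1
     end]].

(* ---------- paths: l is the list of states visited after the start s,
   the path is labeled w and ends in t ---------- *)
Fixpoint is_path (S T : eqType) (edge : S -> T -> S -> bool)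
    (s : S) (w : seq T) (l : seq S) (t : S) : bool :=
  match w, l with
  | [::], [::] => s == t
  | a :: w', s' :: l' => edge s a s' && is_path edge s' w' l' t
  | _, _ => false
  end.

Definition has_card (T : eqType) (P : T -> bool) (n : nat) : Prop :=
  exists s : seq T, [/\ uniq s, (forall x, (x \in s) = P x) & size s = n].

Definition factorization (A : eqType) (X : seq (seq A)) (w : seq A)
    (f : seq (seq A)) : bool :=
  all (mem X) f && (flatten f == w).

Definition complete (B : eqType) (Y : seq (seq B)) : Prop :=
  forall u : seq B, exists f : seq (seq B), all (mem Y) f /\ infix u (flatten f).

Definition is_reduction (S1 S2 T : eqType)
    (st1 : S1 -> bool) (e1 : S1 -> T -> S1 -> bool) (i1 t1 : S1)
    (st2 : S2 -> bool) (e2 : S2 -> T -> S2 -> bool) (i2 t2 : S2)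
    (rho : S1 -> S2) : Prop :=
  [/\ (forall x, st1 x -> st2 (rho x)),
      (forall y, st2 y -> exists x, st1 x /\ rho x = y),
      rho i1 = i2, rho t1 = t2 &
      forall y y', st2 y -> st2 y' -> forall w : seq T,
        (exists l, is_path e2 y w l y') <->
        (exists x x', [/\ st1 x, st1 x', rho x = y, rho x' = y' &
                         exists l, is_path e1 x w l x'])].

(* Main.v *)
Require Import Defs.
From mathcomp Require Import all_boot zify.
Set Implicit Arguments. Unset Strict Implicit. Unset Printing Implicit Defensive.

Lemma is_path_cat (S T : eqType) (e : S -> T -> S -> bool) s w1 l1 m w2 l2 t :
  is_path e s w1 l1 m -> is_path e m w2 l2 t -> is_path e s (w1 ++ w2) (l1 ++ l2) t.
Proof.
elim: w1 s l1 => [|a w1 IH] s [|s' l1] //=; first by move=> /eqP ->.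
by case/andP=> -> /IH H /H.
Qed.

Lemma is_path_split (S T : eqType) (e : S -> T -> S -> bool) s u1 u2 l t :
  is_path e s (u1 ++ u2) l t -> exists m l1 l2,
   [/\ l = l1 ++ l2, is_path e s u1 l1 m & is_path e m u2 l2 t].
Proof.
elim: u1 s l => [|a u1 IH] s l /=.
  by move=> H; exists s, [::], l; split => //=.
case: l => // s' l /andP[He /IH [m [l1 [l2 [-> H1 H2]]]]].
by exists m, (s' :: l1), l2; split => //=; rewrite He.
Qed.

Lemma is_path_size (S T : eqType) (e : S -> T -> S -> bool) s w l t :
  is_path e s w l t -> size l = size w.
Proof.
by elim: w s l => [|a w IH] s [|s' l] //= /andP[_ /IH ->].
Qed.

Lemma is_path_nil (S T : eqType) (e : S -> T -> S -> bool) s l t :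
  is_path e s [::] l t -> l = [::] /\ s = t.
Proof. by case: l => //= /eqP. Qed.

Lemma has_card_uniq (T : eqType) (P : T -> bool) n m :
  has_card P n -> has_card P m -> n = m.
Proof.
move=> [s [us ms <-]] [t [ut mt <-]].
apply: perm_size; apply: uniq_perm => // x; by rewrite ms mt.
Qed.

Lemma card_bij1 (T1 T2 : eqType) (P1 : T1 -> bool) (P2 : T2 -> bool)
  (F : T1 -> T2) (G : T2 -> T1) :
  (forall x, P1 x -> P2 (F x)) -> (forall y, P2 y -> P1 (G y)) ->
  (forall x, P1 x -> G (F x) = x) -> (forall y, P2 y -> F (G y) = y) ->
  forall n, has_card P1 n -> has_card P2 n.
Proof.
move=> HF HG HGF HFG n [s [us ms <-]].
exists (map F s); split; last by rewrite size_map.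
- rewrite map_inj_in_uniq // => x y; rewrite !ms => Px Py E.
  by rewrite -(HGF _ Px) E HGF.
- move=> y; apply/mapP/idP => [[x]|Py]; first by rewrite ms => Px ->; apply: HF.
  by exists (G y); [rewrite ms; apply: HG | rewrite HFG].
Qed.

Lemma card_bij (T1 T2 : eqType) (P1 : T1 -> bool) (P2 : T2 -> bool)
  (F : T1 -> T2) (G : T2 -> T1) :
  (forall x, P1 x -> P2 (F x)) -> (forall y, P2 y -> P1 (G y)) ->
  (forall x, P1 x -> G (F x) = x) -> (forall y, P2 y -> F (G y) = y) ->
  forall n, has_card P1 n <-> has_card P2 n.
Proof.
move=> HF HG HGF HFG n; split; [exact: (card_bij1 HF HG HGF HFG)|].
exact: (card_bij1 HG HF HFG HGF).
Qed.

Lemma pa_stateP (T : eqType) (X : seq (seq T)) p v :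
  p ++ v \in X -> v != [::] -> pa_state X p.
Proof.
move=> Hx Hv; apply/hasP; exists (p ++ v) => //.
by rewrite prefix_prefix size_cat -{1}(addn0 (size p)) ltn_add2l lt0n size_eq0.
Qed.

Lemma pa_state_nil (T : eqType) (X : seq (seq T)) x :
  x \in X -> x != [::] -> pa_state X [::].
Proof. by move=> Hx Hn; apply: (@pa_stateP _ _ _ x). Qed.

Lemma pa_edge_state (T : eqType) (X : seq (seq T)) p a p' :
  pa_edge X p a p' -> pa_state X p && pa_state X p'.
Proof.
case/andP=> -> /orP[/andP[/eqP -> ->]//|/andP[/eqP -> H]].
by rewrite /=; apply: (pa_state_nil H); rewrite -size_eq0 size_rcons.
Qed.

Fixpoint cut (T S : eqType) (o : S) (w : seq T) (l : seq S) (acc : seq T) : seq (seq T) :=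
  match w, l with
  | a :: w', s :: l' => if s == o then rcons acc a :: cut o w' l' [::]
                        else cut o w' l' (rcons acc a)
  | _, _ => [::]
  end.

Lemma cut_cat (T S : eqType) (o : S) (w : seq T) l l0 : forall u acc,
  size u = (size l0).+1 -> all (fun s => s != o) l0 ->
  cut o (u ++ w) (rcons l0 o ++ l) acc = (acc ++ u) :: cut o w l [::].
Proof.
elim: l0 => [|s l0 IH] [|a u] acc //=.
  by case: u => //= _ _; rewrite eqxx cats1.
move=> [Hs] /andP[Hso Hall]; rewrite (negbTE Hso) IH //.
by rewrite cat_rcons.
Qed.

Lemma take_mem (T : eqType) (l0 l' : seq T) s : l' != [::] ->
  s \in take (size (l0 ++ s :: l')).-1 (l0 ++ s :: l').
Proof.
case: l' => // s' l' _; elim: l0 => [|x l0 IH] /=; first by rewrite mem_head.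
by move: IH; rewrite size_cat /= addnS /= => IH; rewrite in_cons IH orbT.
Qed.

Section Main.
Variables (A B : finType) (Y : seq (seq B)) (Z : seq (seq A)) (beta : B -> seq A).
Hypothesis hY : all (fun y => y != [::]) Y.
Hypothesis hZ : all (fun z => z != [::]) Z.
Hypothesis hbinj : injective beta.
Hypothesis hbin : forall b, beta b \in Z.

Local Notation wr := (wr_edge Y Z beta).

Fixpoint zpath (q q' : seq B) (p : seq A) (u : seq A) : seq (seq B * seq A) :=
  match u with
  | [::] => [::]
  | a :: u' => if u' is [::] then [:: (q', [::])]
               else (q, rcons p a) :: zpath q q' (rcons p a) u'
  end.

Fixpoint ypath (q : seq B) (y : seq B) : seq (seq B * seq A) :=
  match y with
  | [::] => [::]
  | b :: y' => if y' is [::] then zpath q [::] [::] (beta b)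
               else zpath q (rcons q b) [::] (beta b) ++ ypath (rcons q b) y'
  end.

Lemma beta_nil b : beta b != [::].
Proof. exact: (allP hZ _ (hbin b)). Qed.

Lemma rcons_nil (T : eqType) (p : seq T) a : rcons p a != [::].
Proof. by case: p. Qed.

Lemma wr_None q p a : pa_state Y q -> pa_state Z p -> pa_state Z (rcons p a) ->
  wr (q, p) a (q, rcons p a).
Proof.
move=> Hq Hp Hpa; rewrite /wr_edge /= Hq Hp Hpa /=.
by apply/existsP; exists None; rewrite /tr_edge Hp !eqxx Hpa /=.
Qed.

Lemma wr_Some q p a b q' : pa_state Z p -> rcons p a = beta b ->
  pa_edge Y q b q' -> wr (q, p) a (q', [::]).
Proof.
move=> Hp Hpa He; case/andP: (pa_edge_state He) => Hq Hq'.
rewrite /wr_edge /= Hq Hp Hq' (pa_state_nil (hbin b) (beta_nil b)) /=.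
by apply/existsP; exists (Some b); rewrite /tr_edge Hp Hpa !eqxx hbin.
Qed.

Lemma ZOK q b q' : pa_edge Y q b q' -> forall u p, p ++ u = beta b -> u != [::] ->
  is_path wr (q, p) u (zpath q q' p u) (q', [::]).
Proof.
move=> He; elim=> [|a u IH] p // Hpu _.
have Hp : pa_state Z p by apply: (@pa_stateP _ _ _ (a :: u)) => //; move: (hbin b); rewrite -Hpu.
case: u IH Hpu => [|c u] IH Hpu /=.
  by rewrite eqxx andbT; apply: (wr_Some Hp _ He); rewrite -cats1.
rewrite wr_None //.
- by apply: IH => //; rewrite cat_rcons.
- by case/andP: (pa_edge_state He).
- by apply: (@pa_stateP _ _ _ (c :: u)) => //; rewrite cat_rcons Hpu hbin.
Qed.

Lemma Zstruct q q' p u : u != [::] -> exists l0,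
  zpath q q' p u = rcons l0 (q', [::]) /\ all (fun s => s.2 != [::]) l0.
Proof.
elim: u p => [|a u IH] p // _; case: u IH => [|c u] IH; first by exists [::].
have [l0 [E H]] := IH (rcons p a) isT.
have -> : zpath q q' p [:: a, c & u] = (q, rcons p a) :: zpath q q' (rcons p a) (c :: u) by [].
by exists ((q, rcons p a) :: l0); rewrite E /= rcons_nil.
Qed.

Lemma Zstep w : forall l q p t, is_path wr (q, p) w l t -> t.2 = [::] -> w != [::] ->
  exists b q' u w' l', [/\ w = u ++ w', p ++ u = beta b, u != [::] &
     [/\ l = zpath q q' p u ++ l', pa_edge Y q b q' & is_path wr (q', [::]) w' l' t]].
Proof.
elim: w => [|a w IH] [|[q1 p1] l] q p t //= /andP[He Hp] Ht _.
case/and5P: He => _ _ _ _ /existsP[[b|] /andP[Htr Ho]].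
  case/andP: Htr => _ /andP[/andP[/eqP /= Ep1 /eqP Eb] _]; subst p1.
  exists b, q1, [:: a], w, l; split => //.
  by rewrite cats1.
case/andP: Htr => _ /andP[/eqP /= Ep1 _]; move/eqP: Ho => /= Eq1; subst p1 q1.
case: w IH Hp => [|c w] IH Hp.
  by case/is_path_nil: Hp => _ Et; move: Ht; rewrite -Et /=; case: (p) => // ? ? ; rewrite rcons_cons.
have [b [q' [u [w' [l' [Ew Eu Hu [El He' Hp']]]]]]] := IH _ _ _ _ Hp Ht isT.
exists b, q', (a :: u), w', l'; split => //.
- by rewrite Ew.
- by rewrite -cat_rcons.
split => //.
by case: u Ew Eu Hu El => // c' u' Ew Eu Hu El /=; rewrite El.
Qed.

Lemma YOK y : forall q, q ++ y \in Y -> y != [::] ->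
  is_path wr (q, [::]) (morph beta y) (ypath q y) ([::], [::]).
Proof.
elim: y => [|b y IH] q // Hy _.
have Hq : pa_state Y q by apply: (@pa_stateP _ _ _ (b :: y)).
rewrite /morph /=; case: y IH Hy => [|c y] IH Hy.
  rewrite cats0; apply: ZOK => //.
  by rewrite /pa_edge Hq eqxx -cats1 Hy orbT.
  exact: beta_nil.
have He : pa_edge Y q b (rcons q b).
  rewrite /pa_edge Hq eqxx /=; apply/orP; left; apply: (@pa_stateP _ _ _ (c :: y)) => //.
  by rewrite cat_rcons.
apply: is_path_cat; first by apply: ZOK He _ _ _ _ => //; apply: beta_nil.
by apply: IH => //; rewrite cat_rcons.
Qed.

Lemma ne_nil2 (s : seq B * seq A) : s.2 != [::] -> s != ([::], [::]).
Proof. by case: s => ? [] //= ? ? _; rewrite xpair_eqE andbF. Qed.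

Lemma Ystruct y q : y != [::] -> exists l0,
  ypath q y = rcons l0 ([::], [::]) /\ all (fun s => s != ([::], [::])) l0.
Proof.
elim: y q => [|b y IH] q // _; case: y IH => [|c y] IH.
  have [l0 [E H]] := Zstruct q [::] [::] (beta_nil b).
  exists l0; split => //; apply/allP => s /(allP H); exact: ne_nil2.
have -> : ypath q [:: b, c & y] = zpath q (rcons q b) [::] (beta b) ++ ypath (rcons q b) (c :: y) by [].
have [l0 [-> H]] := Zstruct q (rcons q b) [::] (beta_nil b).
have [l1 [-> H1]] := IH (rcons q b) isT.
exists (l0 ++ (rcons q b, [::]) :: l1); split; first by rewrite cat_rcons rcons_cat.
rewrite all_cat; apply/andP; split; first by apply/allP => s /(allP H); exact: ne_nil2.
apply/andP; split; last exact: H1.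
by case: (q).
Qed.

Lemma Ystep n : forall w l q, size w < n ->
  is_path wr (q, [::]) w l ([::], [::]) -> w != [::] -> exists y w' l',
  [/\ q ++ y \in Y, y != [::], w = morph beta y ++ w', l = ypath q y ++ l' &
      is_path wr ([::], [::]) w' l' ([::], [::])].
Proof.
elim: n => [|n IHn] w l q // Hn Hp Hw.
have [b [q' [u [w1 [l1 [Ew Eu Hu [El He Hp1]]]]]]] := Zstep Hp erefl Hw.
rewrite /= in Eu; subst u.
case/andP: He => _ /orP[/andP[/eqP Eq' _]|/andP[/eqP Eq' Hin]]; subst q'.
  case: w1 Ew Hp1 => [|c w1] Ew Hp1.
    by case/is_path_nil: Hp1 => _ []; case: (q).
  have Hs : size (c :: w1) < n.
    have Hb := beta_nil b; rewrite -size_eq0 in Hb; move: Hn Hb; rewrite Ew size_cat /=; lia.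
  have [y [w' [l' [Hy Hy0 Ew1 El1 Hp']]]] := IHn _ _ _ Hs Hp1 isT.
  exists (b :: y), w', l'; split => //.
  - by rewrite -cat_rcons.
  - by rewrite Ew Ew1 /morph /= catA.
  - by rewrite El El1 /=; case: y Hy Hy0 Ew1 El1 => // ? ?; rewrite catA.
exists [:: b], w1, l1; split => //.
- by rewrite cats1.
- by rewrite Ew /morph /= cats0.
Qed.


Hypothesis hbsurj : forall z, z \in Z -> exists b, beta b = z.
Hypothesis hocc : forall b : B, has (fun y => b \in y) Y.
Hypothesis htrim : {in Y &, injective (morph beta)}.

Definition Xs := map (morph beta) Y.
Definition yof (x : seq A) := nth [::] Y (index x Xs).
Definition Gf (f : seq (seq A)) := flatten (map (fun x => ypath [::] (yof x)) f).
Local Notation o := (([::], [::]) : seq B * seq A).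

Lemma yofK y : y \in Y -> yof (morph beta y) = y.
Proof. by move=> Hy; rewrite /yof /Xs nth_index_map. Qed.

Lemma part_a1 n : forall w l, size w < n -> is_path wr o w l o ->
  factorization Xs w (cut o w l [::]) /\ Gf (cut o w l [::]) = l.
Proof.
elim: n => [|n IHn] w l // Hn Hp.
case: w Hn Hp => [|a w] Hn Hp.
  by case/is_path_nil: Hp => -> _.
have [y [w' [l' [Hy Hy0 Ew El Hp']]]] := Ystep (n := n.+1) Hn Hp isT.
rewrite /= in Hy.
have [l0 [E Hall]] := Ystruct [::] Hy0.
have Hsz := is_path_size (YOK (q := [::]) Hy Hy0); rewrite E size_rcons in Hsz.
have Hs : size w' < n by move: Hn; rewrite Ew size_cat -Hsz addSn ltnS => H; apply: leq_ltn_trans (leq_addl _ _) H.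
have [Hf HG] := IHn _ _ Hs Hp'.
rewrite Ew El E cut_cat //.
split.
  case/andP: Hf => Hf1 /eqP Hf2.
  by rewrite /factorization /= map_f //= Hf1 Hf2 eqxx.
by rewrite /Gf /= -/(Gf _) HG yofK // E.
Qed.

Lemma part_a2 f : forall w, factorization Xs w f ->
  is_path wr o w (Gf f) o /\ cut o w (Gf f) [::] = f.
Proof.
elim: f => [|x f IH] w /andP[Hall /eqP Ew]; first by rewrite -Ew.
case/andP: Hall => Hx Hall.
case/mapP: Hx => y Hy Exy; subst x.
have Hy0 : y != [::] by apply: (allP hY).
have [Hp Hc] := IH (flatten f) (introT andP (conj Hall (eqxx _))).
rewrite /Gf /= -/(Gf _) yofK //; rewrite -Ew /=.
split; first by apply: is_path_cat (YOK (q := [::]) Hy Hy0) Hp.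
have [l0 [E Hall0]] := Ystruct [::] Hy0.
have Hsz := is_path_size (YOK (q := [::]) Hy Hy0); rewrite E size_rcons in Hsz.
by rewrite E cut_cat // Hc.
Qed.

Lemma part_a w n :
  has_card (fun l => is_path wr o w l o) n <-> has_card (factorization Xs w) n.
Proof.
apply: (card_bij (F := fun l => cut o w l [::]) (G := Gf)).
- by move=> l /(part_a1 (n := (size w).+1) (ltnSn _)) [].
- by move=> f /part_a2 [].
- by move=> l /(part_a1 (n := (size w).+1) (ltnSn _)) [].
- by move=> f /part_a2 [].
Qed.

Lemma part_c q q' b : pa_state Y q -> pa_state Y q' ->
  pa_edge Y q b q' <->
  exists l, is_path wr (q, [::]) (beta b) l (q', [::])
            /\ all (fun s : seq B * seq A => s.2 != [::]) (take (size l).-1 l).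
Proof.
move=> Hq Hq'; split=> [He|[l [Hp Hall]]].
  exists (zpath q q' [::] (beta b)); split.
    by apply: (ZOK He) => //; apply: beta_nil.
  have [l0 [-> H]] := Zstruct q q' [::] (beta_nil b).
  by rewrite size_rcons /= -cats1 take_size_cat.
have [b' [q'' [u [w' [l' [Ew Eu Hu [El He Hp']]]]]]] := Zstep Hp erefl (beta_nil b).
rewrite /= in Eu; subst u.
have [l0 [E _]] := Zstruct q q'' [::] (beta_nil b').
case: w' Ew Hp' => [|c w'] Ew Hp'.
  case/is_path_nil: Hp' => _ [<-].
  by move: Ew; rewrite cats0 => /hbinj ->.
exfalso.
have Hl' : l' != [::] by rewrite -size_eq0 (is_path_size Hp').
move: Hall; rewrite El E -cats1 -catA /= => /allP /(_ _ (take_mem l0 (q'', [::]) Hl')).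
by rewrite eqxx.
Qed.

Lemma wr_proj s a s' : wr s a s' -> pa_edge Z s.2 a s'.2.
Proof.
case/and5P=> _ Hp _ _ /existsP[[b|] /andP[Htr _]]; rewrite /pa_edge Hp /=.
  case/andP: Htr => _ /andP[/andP[-> /eqP Eb] Hb] /=.
  by rewrite Eb Hb orbT.
by case/andP: Htr => _ /andP[-> ->].
Qed.

Lemma proj_path w : forall l s t, is_path wr s w l t ->
  is_path (pa_edge Z) s.2 w (map snd l) t.2.
Proof.
elim: w => [|a w IH] [|s' l] s t //=; first by move/eqP ->.
by case/andP=> /wr_proj -> /IH.
Qed.

Lemma liftZ w : forall lp p p', is_path (pa_edge Z) p w lp p' ->
  exists bs, forall q lq q', is_path (pa_edge Y) q bs lq q' -> pa_state Y q ->
  exists l, is_path wr (q, p) w l (q', p').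
Proof.
elim: w => [|a w IH] [|p1 lp] p p' //=.
  move/eqP=> <-; exists [::] => q [|//] q' /= /eqP <- _.
  by exists [::].
case/andP=> He Hpath.
have [bs Hbs] := IH _ _ _ Hpath.
case/andP: He => Hp /orP[/andP[/eqP Ep1 Hp1]|/andP[/eqP Ep1 Hin]]; subst p1.
  exists bs => q lq q' Hq Hqs.
  have [l Hl] := Hbs _ _ _ Hq Hqs.
  by exists ((q, rcons p a) :: l); rewrite /= wr_None.
have [b Eb] := hbsurj Hin.
exists (b :: bs) => q [|q1 lq] q' //= /andP[Heq Hq].
move=> Hqs; have /andP[_ Hq1] := pa_edge_state Heq.
have [l Hl] := Hbs _ _ _ Hq Hq1.
by exists ((q1, [::]) :: l); rewrite /= Hl andbT (wr_Some Hp _ Heq).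
Qed.

Lemma Ypath_exists y : forall q, q ++ y \in Y -> y != [::] ->
  exists lq, is_path (pa_edge Y) q y lq [::].
Proof.
elim: y => [|b y IH] q // Hy _.
have Hq : pa_state Y q by apply: (@pa_stateP _ _ _ (b :: y)).
case: y IH Hy => [|c y] IH Hy.
  exists [:: [::]]; rewrite /= andbT /pa_edge Hq /=.
  apply/orP; right; rewrite -cats1; exact: Hy.
have Hy' : rcons q b ++ c :: y \in Y by rewrite cat_rcons.
have [lq Hlq] := IH (rcons q b) Hy' isT.
exists (rcons q b :: lq); apply/andP; split; last exact: Hlq.
rewrite /pa_edge Hq /=.
apply/orP; left; rewrite ?eqxx /=.
by apply: (@pa_stateP _ _ _ (c :: y)) => //; rewrite cat_rcons.
Qed.

Lemma flatten_path f : all (mem Y) f -> exists lq, is_path (pa_edge Y) [::] (flatten f) lq [::].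
Proof.
elim: f => [|y f IH] /=; first by exists [::].
case/andP=> Hy /IH [lq Hlq].
have [lq0 H0] := Ypath_exists (q := [::]) Hy (allP hY _ Hy).
by exists (lq0 ++ lq); apply: is_path_cat H0 Hlq.
Qed.

Lemma Qvalid u : forall lq q q', is_path (pa_edge Y) q u lq q' -> pa_state Y q -> pa_state Y q'.
Proof.
elim: u => [|b u IH] [|q1 lq] q q' //=; first by move/eqP <-.
by case/andP=> /pa_edge_state /andP[_ H1] /IH H _; apply: H.
Qed.

Lemma Ynil y : pa_state Z y -> pa_state Y [::].
Proof.
case/hasP=> z Hz _; have [b Eb] := hbsurj Hz.
case/hasP: (hocc b) => y0 Hy0 Hb.
by apply: (pa_state_nil Hy0); case: (y0) Hb.
Qed.

Lemma part_b : complete Y ->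
  is_reduction (fun s : seq B * seq A => pa_state Y s.1 && pa_state Z s.2) wr o o
               (pa_state Z) (pa_edge Z) [::] [::] (fun s : seq B * seq A => s.2).
Proof.
move=> Hc; split => //.
- by move=> x /andP[].
- move=> y Hy; exists ([::], y); split => //=.
  by rewrite (Ynil Hy).
move=> y y' Hy Hy' w; split.
  case=> lp Hp.
  have [bs Hbs] := liftZ Hp.
  have [f [Hf /infixP [s1 [s2 Ef]]]] := Hc bs.
  have [lq Hlq] := flatten_path Hf.
  rewrite Ef in Hlq.
  have [m [lq1 [lq2 [_ H1 H2]]]] := is_path_split Hlq.
  have [m' [lq3 [lq4 [_ H3 _]]]] := is_path_split H2.
  have Hm : pa_state Y m by apply: Qvalid H1 (Ynil Hy).
  have Hm' : pa_state Y m' by apply: Qvalid H3 Hm.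
  have [l Hl] := Hbs _ _ _ H3 Hm.
  exists (m, y), (m', y'); split => //=; rewrite ?Hm ?Hm' ?Hy ?Hy' //.
  by exists l.
case=> x [x' [_ _ <- <- [l Hl]]].
by exists (map snd l); apply: proj_path.
Qed.

End Main.

Theorem mainTheorem5 (A B : finType) (Y : seq (seq B)) (Z : seq (seq A))
    (beta : B -> seq A)
    (hY : all (fun y => y != [::]) Y)
    (hZ : all (fun z => z != [::]) Z)
    (hbinj : injective beta)
    (hbin : forall b, beta b \in Z)
    (hbsurj : forall z, z \in Z -> exists b, beta b = z)
    (hocc : forall b : B, has (fun y => b \in y) Y)
    (htrim : {in Y &, injective (morph beta)}) :
  let X := map (morph beta) Y in
  let Astate := fun s : seq B * seq A => pa_state Y s.1 && pa_state Z s.2 in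
  (forall (w : seq A) (n : nat),
     has_card (fun l => is_path (wr_edge Y Z beta) ([::], [::]) w l ([::], [::])) n
     <-> has_card (factorization X w) n)
  /\
  (complete Y ->
     is_reduction Astate (wr_edge Y Z beta) ([::], [::]) ([::], [::])
                  (pa_state Z) (pa_edge Z) [::] [::]
                  (fun s : seq B * seq A => s.2))
  /\
  (forall (q q' : seq B) (b : B), pa_state Y q -> pa_state Y q' ->
     pa_edge Y q b q' <->
     exists l, is_path (wr_edge Y Z beta) (q, [::]) (beta b) l (q', [::])
               /\ all (fun s : seq B * seq A => s.2 != [::]) (take (size l).-1 l)).
Proof.
move=> X Astate; split; first by move=> w n; apply: part_a.
split; first by move=> Hc; apply: part_b.
by move=> q q' b; apply: part_c.
Qed.
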